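(* Let $n\ge0$ and run the Tiden–Arnborg algorithm on $\sigma(n)$, performing sum transformations level by level. The sum transformations at level $k$ create a peak at $x_{1^k}$ (a node of level $k+1$), provided level $k+1$ is not the lowest level $n+3$.
   Context: Variables are $T$, $x_s$, $y_s$ with $s$ a string over $\{1,2\}$ ($x=x_\varepsilon$, $y=y_\varepsilon$); the level of $x_s$ or $y_s$ is $|s|+1$. For $n\ge0$, $\sigma(n)$ consists of, for all $0\le i\le n$: $x_{1^i}=^?x_{1^{i+1}}+x_{1^i2}$, $y_{2^i}=^?y_{2^i1}+y_{2^{i+1}}$, $y_{2^i1}=^?T\times x_{1^i2}$, $x=^?T\times y$, $x_{1^{i+1}}=^?x_{1^{i+2}}+x_{1^{i+1}2}$; its variables occupy levels $1,\dots,n+3$. A variable $U_i$ ($U\in\{x,y\}$) is a peak if the current system contains both $U_i=^?U_{i1}+U_{i2}$ and $U_i=^?T\times W_j$ for some $W_j$. A sum transformation at a peak $U_i$ replaces $U_i=^?U_{i1}+U_{i2}$ by $W_j=^?W_{j1}+W_{j2}$, $U_{i1}=^?T\times W_{j1}$, $U_{i2}=^?T\times W_{j2}$ (keeping $U_i=^?T\times W_j$), with $W_{j1},W_{j2}$ identified with the existing children of $W_j$ if $W_j$ already has a sum equation. The Tiden–Arnborg algorithm (for $x\times(y+z)=x\times y+x\times z$) applies sum transformations as long as possible; here all sum transformations at one level are completed before those at the next level. *)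

(* Defs.v *)
From Stdlib Require Import List Relations Arith.
Import ListNotations.

Inductive letter : Type := L1 | L2.

Inductive var : Type :=
  | VT : var
  | X : list letter -> var
  | Y : list letter -> var.

(* Level of x_s or y_s is |s|+1 (T is given level 0; it never is a peak). *)
Definition level (v : var) : nat :=
  match v with
  | VT => 0
  | X s => S (length s)
  | Y s => S (length s)
  end.

(* The child U_{s c} of U_s (fresh-name convention). *)
Definition child (v : var) (c : letter) : var :=
  match v with
  | VT => VT
  | X s => X (s ++ [c])
  | Y s => Y (s ++ [c])
  end.

(* Equations:  ESum u v w  is  u =? v + w ;  EProd u a w  is  u =? a × w. *)
Inductive eqn : Type :=
  | ESum : var -> var -> var -> eqn
  | EProd : var -> var -> var -> eqn.

Definition system := eqn -> Prop.

Definition sigma (n : nat) : system := fun e =>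
  exists i, i <= n /\
   (e = ESum (X (repeat L1 i)) (X (repeat L1 (S i))) (X (repeat L1 i ++ [L2]))
 \/ e = ESum (Y (repeat L2 i)) (Y (repeat L2 i ++ [L1])) (Y (repeat L2 (S i)))
 \/ e = EProd (Y (repeat L2 i ++ [L1])) VT (X (repeat L1 i ++ [L2]))
 \/ e = EProd (X []) VT (Y [])
 \/ e = ESum (X (repeat L1 (S i))) (X (repeat L1 (S (S i))))
             (X (repeat L1 (S i) ++ [L2]))).

Definition is_peak (S : system) (u : var) : Prop :=
  (exists v1 v2, S (ESum u v1 v2)) /\ (exists w, S (EProd u VT w)).

Definition sum_transf (u : var) (S S' : system) : Prop :=
  exists v1 v2 w w1 w2,
    S (ESum u v1 v2) /\ S (EProd u VT w) /\
    ((S (ESum w w1 w2)) \/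
     ((forall a b, ~ S (ESum w a b)) /\ w1 = child w L1 /\ w2 = child w L2)) /\
    (forall e, S' e <->
       ((S e /\ e <> ESum u v1 v2) \/ e = ESum w w1 w2 \/
        e = EProd v1 VT w1 \/ e = EProd v2 VT w2)).

Definition step_at_level (k : nat) (S S' : system) : Prop :=
  exists u, level u = k /\ sum_transf u S S'.

Definition phase (k : nat) (S S' : system) : Prop :=
  clos_refl_trans system (step_at_level k) S S' /\
  (forall u, level u = k -> ~ is_peak S' u).

Inductive run (n : nat) : nat -> system -> Prop :=
  | run0 : run n 0 (sigma n)
  | runS : forall k Q Q', run n k Q -> phase (S k) Q Q' -> run n (S k) Q'.

(* Main.v *)
Require Import Defs.
From Stdlib Require Import List Arith.
From Stdlib Require Import Classical Lia Relations.
Import ListNotations.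

Definition Inv (S : system) : Prop :=
  (forall u a b, S (ESum u a b) -> level a = Datatypes.S (level u) /\ level b = Datatypes.S (level u)) /\
  (forall u w, S (EProd u VT w) -> w <> VT).

Lemma keep_sum u S S' x a b : sum_transf u S S' -> S (ESum x a b) -> x <> u -> S' (ESum x a b).
Proof.
  intros (v1&v2&w&w1&w2&Hs&Hp&Hw&Heq) H Hx. apply Heq. left. split; auto.
  intro E; injection E; intros; congruence.
Qed.

Lemma keep_prod u S S' x y z : sum_transf u S S' -> S (EProd x y z) -> S' (EProd x y z).
Proof.
  intros (v1&v2&w&w1&w2&Hs&Hp&Hw&Heq) H. apply Heq. left. split; auto. discriminate.
Qed.

Lemma lev_ne v : level v <> 0 -> v <> VT.
Proof. intros H E; subst; simpl in H; congruence. Qed.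

Lemma Inv_step u S S' : sum_transf u S S' -> Inv S -> Inv S'.
Proof.
  intros (v1&v2&w&w1&w2&Hs&Hp&Hw&Heq) [I1 I2].
  assert (Hwv : w <> VT) by (eapply I2; eauto).
  assert (Hl : level w1 = Datatypes.S (level w) /\ level w2 = Datatypes.S (level w)).
  { destruct Hw as [Hw|(_&->&->)]; [eapply I1; eauto|].
    destruct w; simpl; try congruence; rewrite !length_app; simpl; split; lia. }
  destruct Hl as [Hl1 Hl2].
  split.
  - intros x a b Hx. apply Heq in Hx.
    destruct Hx as [[Hx _]|[E|[E|E]]]; try discriminate; eauto.
    injection E; intros; subst; auto.
  - intros x z Hx. apply Heq in Hx.
    destruct Hx as [[Hx _]|[E|[E|E]]]; try discriminate; eauto;
    injection E; intros; subst; apply lev_ne; congruence.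
Qed.

Lemma prod_step u S S' : sum_transf u S S' -> Inv S ->
  forall x w, S' (EProd x VT w) -> S (EProd x VT w) \/ level x = Datatypes.S (level u).
Proof.
  intros (v1&v2&w&w1&w2&Hs&Hp&Hw&Heq) [I1 I2] x z Hx.
  destruct (I1 _ _ _ Hs) as [L1' L2'].
  apply Heq in Hx.
  destruct Hx as [[Hx _]|[E|[E|E]]]; try discriminate; auto;
  injection E; intros; subst; auto.
Qed.

Lemma crt_inv k (P : system -> Prop) Q Q' :
  (forall S S', step_at_level k S S' -> P S -> P S') ->
  clos_refl_trans system (step_at_level k) Q Q' -> P Q -> P Q'.
Proof. intros Hs H; induction H; eauto. Qed.

Lemma sigma_prod_X n s w : sigma n (EProd (X s) VT w) -> s = [].
Proof.
  intros (i&_&H). destruct H as [E|[E|[E|[E|E]]]]; try discriminate; injection E; auto.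
Qed.

Lemma lev_rep j : level (X (repeat L1 j)) = Datatypes.S j.
Proof. simpl; rewrite repeat_length; auto. Qed.

Lemma Inv_sigma n : Inv (sigma n).
Proof.
  split.
  - intros u a b (i&_&H).
    destruct H as [E|[E|[E|[E|E]]]]; try discriminate; injection E; intros; subst;
      simpl; rewrite ?length_app, ?repeat_length; simpl; split; lia.
  - intros u w (i&_&H).
    destruct H as [E|[E|[E|[E|E]]]]; try discriminate; injection E; intros; subst; discriminate.
Qed.

Lemma run_inv n j S : run n j S ->
  Inv S /\ (forall x w, S (EProd x VT w) -> sigma n (EProd x VT w) \/ level x <= Datatypes.S j) /\
  (forall u a b, sigma n (ESum u a b) -> j < level u -> S (ESum u a b)).
Proof.
  induction 1 as [|k Q Q' Hr IH [Hc Hn]].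
  - split; [apply Inv_sigma|]. split; auto.
  - apply (crt_inv (Datatypes.S k) (fun S => Inv S /\ (forall x w, S (EProd x VT w) -> sigma n (EProd x VT w) \/ level x <= Datatypes.S (Datatypes.S k)) /\
  (forall u a b, sigma n (ESum u a b) -> Datatypes.S k < level u -> S (ESum u a b))) Q Q'); auto.
    + intros A B (u&Hu&Ht) (I&Hp&Hs). split; [eapply Inv_step; eauto|]. split.
      * intros x w Hx. destruct (prod_step _ _ _ Ht I _ _ Hx) as [H|H]; [|lia].
        destruct (Hp _ _ H); auto.
      * intros x a b Hx Hl. eapply keep_sum; eauto. intro; subst; lia.
    + destruct IH as (I&Hp&Hs). split; auto. split.
      * intros x w Hx. destruct (Hp _ _ Hx); auto.
      * intros; apply Hs; auto; lia.
Qed.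

Lemma prod_chain n j S : run n j S -> j <= n + 1 -> exists w, S (EProd (X (repeat L1 j)) VT w).
Proof.
  induction 1 as [|k Q Q' Hr IH [Hc Hn]]; intros Hj.
  - exists (Y []). exists 0. split; [lia|]. right; right; right; left; auto.
  - destruct IH as [w0 Hw0]; [lia|].
    destruct (run_inv _ _ _ Hr) as (_&_&Hs).
    set (E0 := ESum (X (repeat L1 k)) (X (repeat L1 (Datatypes.S k))) (X (repeat L1 k ++ [L2]))).
    assert (HE : Q E0).
    { apply Hs; [|rewrite lev_rep; lia]. exists k. split; [lia|]. left; auto. }
    assert (HP : (exists w, Q' (EProd (X (repeat L1 k)) VT w)) /\
                 (Q' E0 \/ exists w, Q' (EProd (X (repeat L1 (Datatypes.S k))) VT w))).
    { apply (crt_inv (Datatypes.S k) (fun S => (exists w, S (EProd (X (repeat L1 k)) VT w)) /\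
                 (S E0 \/ exists w, S (EProd (X (repeat L1 (Datatypes.S k))) VT w))) Q Q'); auto.
      - intros A B (u&Hu&Ht) ([w1 Hw1]&H2). split.
        + exists w1. eapply keep_prod; eauto.
        + destruct H2 as [H2|[w2 Hw2]]; [|right; exists w2; eapply keep_prod; eauto].
          destruct Ht as (v1&v2&w&w1'&w2&Hs'&Hp&Hw&Heq).
          destruct (classic (E0 = ESum u v1 v2)) as [Eab|Hn'].
          * right. unfold E0 in Eab. injection Eab; intros; subst.
            exists w1'. apply Heq. right; right; left; auto.
          * left. apply Heq. left; auto.
      - split; eauto. }
    destruct HP as [[w Hw] [H|H]]; auto.
    exfalso. apply (Hn (X (repeat L1 k))); [apply lev_rep|]. split; eauto.
Qed.

Theorem lemma1 : forall (n k : nat) (S0 S1 : system),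
  1 <= k -> k + 1 < n + 3 ->
  run n (k - 1) S0 -> phase k S0 S1 ->
  ~ is_peak S0 (X (repeat L1 k)) /\ is_peak S1 (X (repeat L1 k)).
Proof.
  intros n k S0 S1 Hk Hkn Hr Hp.
  destruct k as [|j]; [lia|]. simpl in Hr. rewrite Nat.sub_0_r in Hr.
  assert (Hr1 : run n (Datatypes.S j) S1) by (econstructor; eauto).
  split.
  - intros [_ [w Hw]]. destruct (run_inv _ _ _ Hr) as (_&Hpr&_).
    destruct (Hpr _ _ Hw) as [H|H].
    + apply sigma_prod_X in H. discriminate.
    + rewrite lev_rep in H. lia.
  - split; [|apply prod_chain with n; auto; lia].
    destruct (run_inv _ _ _ Hr1) as (_&_&Hs).
    do 2 eexists. apply Hs; [|rewrite lev_rep; lia].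
    exists j. split; [lia|]. right; right; right; right; reflexivity.
Qed.
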